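(* Let $\Phi$ be a MAX NAE-$\{3,5\}$-SAT instance on variables $x_1,\dots,x_n$ with positive weights normalized to total weight $1$, and suppose there are unit vectors $\mathbf v_1,\dots,\mathbf v_n$ such that, writing the literal vector of a literal $b x_i$ as $b\mathbf v_i$: for every $3$-clause $\mathrm{NAE}_3(z_1,z_2,z_3)$ the literal vectors $\mathbf u_1,\mathbf u_2,\mathbf u_3$ satisfy $\mathbf u_i\cdot\mathbf u_j=-\tfrac13$ for all $i\ne j$; and for every $5$-clause $\mathrm{NAE}_5(z_1,\dots,z_5)$ the literal vectors (in a suitable ordering) satisfy $\mathbf u_i\cdot\mathbf u_j=\tfrac13$ for $1\le i<j\le 4$ and $\mathbf u_i\cdot\mathbf u_5=0$ for $1\le i\le 4$. Then $\Phi$ has completeness $1$, i.e., the optimal value of the Basic SDP of $\Phi$ equals $1$.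
   Context: $\mathrm{NAE}_k(y_1,\dots,y_k)$ is $0$ if $y_1=\dots=y_k$ and $1$ otherwise. The Basic SDP for an instance with variables $x_1,\dots,x_n$ and weighted clauses $C$ (weights $w_C$) has unit vectors $\mathbf v_0,\mathbf v_1,\dots,\mathbf v_n\in\mathbb R^{n+1}$ and, for each clause $C$, a probability distribution $p_C$ over assignments $\alpha$ to the variables of $C$, subject to: for each clause $C$ and variables $x_i,x_j$ in $C$, $\mathbf v_i\cdot\mathbf v_j=\sum_\alpha \alpha(x_i)\alpha(x_j)p_C(\alpha)$, and $\mathbf v_i\cdot\mathbf v_0=\sum_\alpha\alpha(x_i)p_C(\alpha)$; the objective is $\sum_C w_C\sum_\alpha p_C(\alpha)C(\alpha)$, where $C(\alpha)\in\{0,1\}$ indicates whether $\alpha$ satisfies $C$. The completeness of an instance is its Basic SDP optimal value. *)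

(* Defs.v *)
From HB Require Import structures.
From mathcomp Require Import all_boot all_order all_algebra all_fingroup.
From mathcomp Require Import classical_sets reals.
Set Implicit Arguments. Unset Strict Implicit. Unset Printing Implicit Defensive.
Import Order.TTheory GRing.Theory Num.Theory.
Local Open Scope ring_scope.

(* A literal (b, i): b = true is x_i, b = false is the negation -x_i. *)
Definition lit (n : nat) := (bool * 'I_n)%type.

Inductive clause (n : nat) :=
| NAE3 of 3.-tuple (lit n)
| NAE5 of 5.-tuple (lit n).

Definition lits n (C : clause n) : seq (lit n) :=
  match C with NAE3 t => tval t | NAE5 t => tval t end.

Definition vars n (C : clause n) : {set 'I_n} := [set l.2 | l in lits C].

(* assignments to the variables of C (true = +1, false = -1) *)
Definition assn n (C : clause n) := {ffun {x : 'I_n | x \in vars C} -> bool}.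

Definition pm (R : numDomainType) (b : bool) : R := if b then 1 else -1.

Definition bval n (C : clause n) (a : assn C) (i : 'I_n) : bool :=
  if insub i is Some j then a j else false.

(* +-1 value of variable x_i under a (0 if x_i does not occur in C; unused) *)
Definition aval (R : numDomainType) n (C : clause n) (a : assn C) (i : 'I_n) : R :=
  if insub i is Some j then pm R (a j) else 0.

Definition litb n (C : clause n) (a : assn C) (l : lit n) : bool :=
  bval a l.2 == l.1.

Definition sat n (C : clause n) (a : assn C) : bool :=
  ~~ constant [seq litb a l | l <- lits C].

Definition instance (R : numDomainType) n := seq (R * clause n).

Definition wclause (R : numDomainType) n (Phi : instance R n) (k : 'I_(size Phi)) :=
  tnth (in_tuple Phi) k.

Definition dot (R : numDomainType) d (u w : 'rV[R]_d) : R := \sum_(k < d) u 0 k * w 0 k.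

(* Basic SDP: v : 'I_n.+1 -> R^(n+1), with v ord0 = v_0 and v (lift ord0 i) = v_i *)
Definition vvar (R : numDomainType) n (v : 'I_n.+1 -> 'rV[R]_(n.+1)) (i : 'I_n) :=
  v (lift ord0 i).

Definition sdp_feasible (R : numDomainType) n (Phi : instance R n)
  (v : 'I_n.+1 -> 'rV[R]_(n.+1))
  (p : forall k : 'I_(size Phi), assn (wclause k).2 -> R) : Prop :=
  (forall k : 'I_n.+1, dot (v k) (v k) = 1) /\
  (forall k : 'I_(size Phi),
     let C := (wclause k).2 in
     (forall a : assn C, 0 <= p k a) /\
     (\sum_(a : assn C) p k a = 1) /\
     (forall i j : 'I_n, i \in vars C -> j \in vars C ->
        dot (vvar v i) (vvar v j) = \sum_(a : assn C) aval R a i * aval R a j * p k a) /\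
     (forall i : 'I_n, i \in vars C ->
        dot (vvar v i) (v ord0) = \sum_(a : assn C) aval R a i * p k a)).

Definition sdp_obj (R : numDomainType) n (Phi : instance R n)
  (p : forall k : 'I_(size Phi), assn (wclause k).2 -> R) : R :=
  \sum_(k : 'I_(size Phi)) (wclause k).1 *
     \sum_(a : assn (wclause k).2) p k a * (sat a)%:R.

Definition completeness (R : realType) n (Phi : instance R n) : R :=
  sup [set x : R | exists v p, @sdp_feasible R n Phi v p /\ x = sdp_obj p].

Definition litvec (R : numDomainType) n d (u : 'I_n -> 'rV[R]_d) (l : lit n) :=
  pm R l.1 *: u l.2.

Definition good_vectors (R : numDomainType) n d (u : 'I_n -> 'rV[R]_d) (C : clause n) : Prop :=
  match C with
  | NAE3 t => forall i j : 'I_3, i != j ->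
      dot (litvec u (tnth t i)) (litvec u (tnth t j)) = - (1 / 3)
  | NAE5 t => exists s : {perm 'I_5},
      let w := fun j : 'I_5 => litvec u (tnth t (s j)) in
      (forall i j : 'I_5, (i < j)%N -> (j < 4)%N -> dot (w i) (w j) = 1 / 3) /\
      (forall i : 'I_5, (i < 4)%N -> dot (w i) (w ord_max) = 0)
  end.

(* Main.v *)
Require Import Defs.
From HB Require Import structures.
From mathcomp Require Import all_boot all_order all_algebra all_fingroup.
From mathcomp Require Import classical_sets reals.
From mathcomp Require Import ring lra.
Import Order.TTheory GRing.Theory Num.Theory.
Local Open Scope ring_scope.
Set Implicit Arguments. Unset Strict Implicit.

Section LA.
Variable R : rcfType.

Lemma dotC d (x y : 'rV[R]_d) : dot x y = dot y x.
Proof. by apply: eq_bigr => k _; rewrite mulrC. Qed.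

Lemma dotDl d (x y z : 'rV[R]_d) : dot (x + y) z = dot x z + dot y z.
Proof. by rewrite /dot -big_split; apply: eq_bigr => k _; rewrite mxE mulrDl. Qed.

Lemma dotNl d (x z : 'rV[R]_d) : dot (- x) z = - dot x z.
Proof. by rewrite /dot -sumrN; apply: eq_bigr => k _; rewrite mxE mulNr. Qed.

Lemma dotBl d (x y z : 'rV[R]_d) : dot (x - y) z = dot x z - dot y z.
Proof. by rewrite dotDl dotNl. Qed.

Lemma dotZl d a (x z : 'rV[R]_d) : dot (a *: x) z = a * dot x z.
Proof. by rewrite /dot mulr_sumr; apply: eq_bigr => k _; rewrite mxE mulrA. Qed.

Lemma dotBr d (x y z : 'rV[R]_d) : dot z (x - y) = dot z x - dot z y.
Proof. by rewrite dotC dotBl ![dot _ z]dotC. Qed.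

Lemma dotZr d a (x z : 'rV[R]_d) : dot z (a *: x) = a * dot z x.
Proof. by rewrite dotC dotZl dotC. Qed.

Lemma dot_ge0 d (x : 'rV[R]_d) : 0 <= dot x x.
Proof. by apply: sumr_ge0 => k _; rewrite -expr2 sqr_ge0. Qed.

Lemma dot_eq0 d (x : 'rV[R]_d) : dot x x = 0 -> x = 0.
Proof.
move=> /eqP; rewrite psumr_eq0; last by move=> k _; rewrite -expr2 sqr_ge0.
move=> /allP H; apply/rowP => k; rewrite mxE.
by have /(_ (mem_index_enum k)) := H k; rewrite implyTb mulf_eq0 orbb => /eqP.
Qed.

Definition ext0 d (x : 'rV[R]_d) (a : R) : 'rV[R]_d.+1 :=
  \row_k (if unlift ord0 k is Some k' then x 0 k' else a).

Lemma dot_ext0 d (x y : 'rV[R]_d) a b : dot (ext0 x a) (ext0 y b) = a * b + dot x y.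
Proof.
rewrite /dot big_ord_recl !mxE unlift_none; congr (_ + _).
by apply: eq_bigr => k _; rewrite !mxE liftK.
Qed.

Definition drop0 d (x : 'rV[R]_d.+1) : 'rV[R]_d := \row_k x 0 (lift ord0 k).

Lemma dot_drop0 d (x y : 'rV[R]_d.+1) : dot x y = x 0 ord0 * y 0 ord0 + dot (drop0 x) (drop0 y).
Proof. by rewrite /dot big_ord_recl; congr (_ + _); apply: eq_bigr => k _; rewrite !mxE. Qed.

Definition e0 d : 'rV[R]_d.+1 := \row_k (k == ord0)%:R.

Lemma dot_e0 d (x : 'rV[R]_d.+1) : dot x (e0 d) = x 0 ord0.
Proof.
rewrite /dot (bigD1 ord0) //= big1 ?addr0; first by rewrite mxE eqxx mulr1.
by move=> k /negbTE nk; rewrite mxE nk mulr0.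
Qed.

Lemma kernel_vec m d (u : 'I_m -> 'rV[R]_d.+1) : (m <= d)%N ->
  exists2 e : 'rV[R]_d.+1, e != 0 & forall i, dot (u i) e = 0.
Proof.
move=> lemd.
pose A : 'M[R]_(d.+1, m) := \matrix_(k, i) u i 0 k.
have : kermx A != 0.
  rewrite -mxrank_eq0 mxrank_ker; have := rank_leq_col A.
  by rewrite subn_eq0 -ltnNge => /leq_ltn_trans; apply; rewrite ltnS.
have [k nk| all0] := pickP (fun k => row k (kermx A) != 0).
  move=> _; exists (row k (kermx A)) => // i.
  have : row k (kermx A) *m A = 0 by rewrite -row_mul mulmx_ker row0.
  move=> /matrixP /(_ 0 i); rewrite !mxE => <-; rewrite dotC.
  by apply: eq_bigr => j _; rewrite !mxE.
move=> /negP []; apply/eqP/row_matrixP => k; rewrite row0.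
by have := all0 k => /= /negbFE /eqP.
Qed.

Lemma hh_iso d (w x y : 'rV[R]_d) : dot w w != 0 ->
  dot (x - (2 * dot x w / dot w w) *: w) (y - (2 * dot y w / dot w w) *: w) = dot x y.
Proof.
move=> wn0; rewrite !dotBl !dotBr !dotZl !dotZr (dotC w y).
by field.
Qed.

Lemma reduce m d (u : 'I_m -> 'rV[R]_d.+1) : (m <= d)%N ->
  exists u' : 'I_m -> 'rV[R]_d, forall i j, dot (u' i) (u' j) = dot (u i) (u j).
Proof.
move=> lemd; have [e ne0 ue] := kernel_vec u lemd.
have ee : 0 < dot e e.
  rewrite lt_def dot_ge0 andbT; apply/negP => /eqP /dot_eq0 H.
  by move/negP: ne0; apply; rewrite H.
pose ne := Num.sqrt (dot e e).
have ne2 : ne * ne = dot e e by rewrite -expr2 sqr_sqrtr // ltW.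
have nep : 0 < ne by rewrite sqrtr_gt0.
pose w := e - ne *: e0 d.
have ww : dot w w = 2 * ne * ne - 2 * ne * e 0 ord0.
  rewrite /w !dotBl !dotBr !dotZl !dotZr (dotC (e0 d)) !dot_e0 mxE eqxx -ne2 mulr1; ring.
have xw : forall i, dot (u i) w = - ne * u i 0 ord0.
  by move=> i; rewrite /w dotBr ue dotZr dot_e0 sub0r mulNr.
have w0 : w 0 ord0 = e 0 ord0 - ne by rewrite !mxE eqxx mulr1.
clearbody w.
have [ww0|wwn0] := eqVneq (dot w w) 0.
  exists (fun i => drop0 (u i)) => i j.
  have wz := dot_eq0 ww0.
  have ui0 : forall i, u i 0 ord0 = 0.
    move=> i'; have := xw i'; rewrite wz /dot big1 => [|k _]; last by rewrite mxE mulr0.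
    move=> /esym /eqP; rewrite mulf_eq0 oppr_eq0 (gt_eqF nep) /= => /eqP //.
  by rewrite (dot_drop0 (u i)) !ui0 mul0r add0r.
pose H x := x - (2 * dot x w / dot w w) *: w.
have Hiso : forall x y, dot (H x) (H y) = dot x y.
  by move=> x y; rewrite /H hh_iso.
have H0 : forall i, H (u i) 0 ord0 = 0.
  move=> i; rewrite /H !mxE w0 xw.
  rewrite ww; rewrite ww in wwn0; by field.
exists (fun i => drop0 (H (u i))) => i j.
by rewrite -Hiso (dot_drop0 (H (u i))) !H0 mul0r add0r.
Qed.

Lemma pad m d (u : 'I_m -> 'rV[R]_d) : (d <= m)%N ->
  exists w : 'I_m -> 'rV[R]_m, forall i j, dot (w i) (w j) = dot (u i) (u j).
Proof.
move=> /subnKC; move: (m - d)%N => k; elim: k d u => [|k IH] d u.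
  by rewrite addn0 => Hd; subst m; exists u.
move=> Hd; have Hd' : (d.+1 + k = m)%N by rewrite addSnnS.
have [w Hw] := IH d.+1 (fun i => ext0 (u i) 0) Hd'.
by exists w => i j; rewrite Hw dot_ext0 mul0r add0r.
Qed.

Lemma gram_rep m d (u : 'I_m -> 'rV[R]_d) :
  exists w : 'I_m -> 'rV[R]_m, forall i j, dot (w i) (w j) = dot (u i) (u j).
Proof.
elim: d u => [|d IH] u; first exact: pad.
have [le|lt] := leqP d.+1 m; first exact: pad.
have [u' Hu'] := reduce u (lt : (m <= d)%N).
have [w Hw] := IH u'; exists w => i j; by rewrite Hw Hu'.
Qed.

End LA.

Section CL.
Variable R : realType.
Variable n : nat.

Lemma pm_eq (b z : bool) : pm R (b == z) = pm R b * pm R z.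
Proof. by case: b; case: z; rewrite /pm /= ?mulr1 ?mul1r ?mulrNN ?mulr1. Qed.

Lemma pm_sq (b : bool) : pm R b * pm R b = 1.
Proof. by case: b; rewrite /pm ?mulr1 ?mulrNN ?mulr1. Qed.

Lemma pm_neg (b : bool) : pm R (~~ b) = - pm R b.
Proof. by case: b; rewrite /pm /= ?opprK. Qed.

Definition vidx (C : clause n) (i : 'I_n) := index i (map snd (lits C)).

Definition zv (q m : nat) (c : bool) := if q == m then ~~ c else c.

Definition alpha (C : clause n) (m : nat) (c : bool) : assn C :=
  [ffun x => (nth (true, val x) (lits C) (vidx C (val x))).1 == zv (vidx C (val x)) m c].

Lemma vars_mem (C : clause n) i : i \in vars C -> i \in map snd (lits C).
Proof. by case/imsetP => l Hl ->; apply: map_f. Qed.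

Lemma vidx_lt (C : clause n) i : i \in vars C -> (vidx C i < size (lits C))%N.
Proof. by move/vars_mem; rewrite -index_mem size_map. Qed.

Lemma nth_vidx (C : clause n) i l0 : i \in vars C -> (nth l0 (lits C) (vidx C i)).2 = i.
Proof.
move=> Hi; have Hl := vidx_lt Hi.
by rewrite -(nth_map l0 l0.2) // nth_index // vars_mem.
Qed.

Lemma aval_alpha (C : clause n) m c i l0 : i \in vars C ->
  aval R (alpha C m c) i = pm R (nth l0 (lits C) (vidx C i)).1 * pm R (zv (vidx C i) m c).
Proof.
move=> Hi; rewrite /aval; case: insubP => [j _ Hj|]; last by rewrite Hi.
by rewrite ffunE Hj pm_eq (set_nth_default l0) // vidx_lt.
Qed.

Lemma litb_alpha (C : clause n) m c q l0 : uniq (map snd (lits C)) -> (q < size (lits C))%N ->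
  litb (alpha C m c) (nth l0 (lits C) q) = zv q m c.
Proof.
move=> U Hq; set l := nth l0 (lits C) q.
have Hv : l.2 \in vars C by apply/imsetP; exists l => //; apply: mem_nth.
have Hidx : vidx C l.2 = q.
  by rewrite /vidx /l -(nth_map l0 l0.2) // index_uniq // size_map.
rewrite /litb /bval; case: insubP => [j _ Hj|]; last by rewrite Hv.
rewrite ffunE Hj Hidx (set_nth_default l0) //.
by rewrite -/l; case: (l.1); case: (zv q m c).
Qed.

Lemma sat_alpha (C : clause n) m c : uniq (map snd (lits C)) -> (2 <= size (lits C))%N ->
  (m < size (lits C))%N -> sat (alpha C m c).
Proof.
move=> U H2 Hm; rewrite /sat; apply/negP => /(constantP true) [x Hx].
set m' := if m == 0%N then 1%N else 0%N.
have Hm' : (m' < size (lits C))%N by rewrite /m'; case: (m == 0%N) => //; apply: leq_trans H2.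
have nm : m' != m by rewrite /m'; case: (m).
have l0 : lit n by case: (lits C) H2 => [|l ?].
have E : forall q, (q < size (lits C))%N -> zv q m c = x.
  move=> q Hq; rewrite -(litb_alpha m c l0 U Hq) -(nth_map l0 true (litb (alpha C m c))) //.
  by rewrite Hx nth_nseq size_map Hq.
have := E _ Hm; have := E _ Hm'; rewrite /zv eqxx (negbTE nm) => <-.
by case: (c).
Qed.

Definition pdist (C : clause n) (pi : nat -> R) (a : assn C) : R :=
  \sum_(m < 5) \sum_(c : bool) (pi m / 2) * (a == alpha C m c)%:R.

Lemma moment (C : clause n) pi (F : assn C -> R) :
  \sum_(a : assn C) F a * pdist pi a = \sum_(m < 5) \sum_(c : bool) (pi m / 2) * F (alpha C m c).
Proof.
under eq_bigr do rewrite /pdist mulr_sumr.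
rewrite exchange_big; apply: eq_bigr => m _.
under eq_bigr do rewrite mulr_sumr.
rewrite exchange_big; apply: eq_bigr => c _.
rewrite (bigD1 (alpha C m c)) //= eqxx big1 => [|a /negbTE ->]; last by rewrite !mulr0.
by rewrite addr0 mulr1 mulrC.
Qed.

Lemma sum_c (b1 b2 : bool) (q1 q2 m : nat) (x : R) :
  \sum_(c : bool) x * (pm R b1 * pm R (zv q1 m c) * (pm R b2 * pm R (zv q2 m c))) =
  2 * x * pm R b1 * pm R b2 * (if (q1 == m) == (q2 == m) then 1 else -1).
Proof.
rewrite big_bool /zv; case: (q1 == m); case: (q2 == m); case: b1; case: b2;
  rewrite /pm /=; ring.
Qed.

Lemma sum_c1 (b : bool) (q m : nat) (x : R) :
  \sum_(c : bool) x * (pm R b * pm R (zv q m c)) = 0.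
Proof. rewrite big_bool /zv; case: (q == m); case: b; rewrite /pm /=; ring. Qed.

Lemma sign_split (q1 q2 m : nat) : q1 != q2 ->
  (if (q1 == m) == (q2 == m) then 1 else -1 : R) = 1 - 2 * (q1 == m)%:R - 2 * (q2 == m)%:R.
Proof.
move=> nq; have [E1|N1] := eqVneq q1 m; have [E2|N2] := eqVneq q2 m => /=.
- by move: nq; rewrite E1 E2 eqxx.
all: ring.
Qed.

Lemma sum_pick (pi : nat -> R) q : (q < 5)%N -> \sum_(m < 5) pi m * (q == m)%:R = pi q.
Proof.
move=> Hq; rewrite (bigD1 (Ordinal Hq)) //= eqxx mulr1 big1 ?addr0 // => m Hm.
have -> : (q == m) = false by apply/negbTE; rewrite eq_sym.
by rewrite mulr0.
Qed.

Variable (d : nat) (u : 'I_n -> 'rV[R]_d).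
Hypothesis hunit : forall i : 'I_n, dot (u i) (u i) = 1.

Definition good_pi (C : clause n) (pi : nat -> R) : Prop :=
  [/\ forall m, 0 <= pi m, \sum_(m < 5) pi m = 1,
      forall m, (size (lits C) <= m)%N -> pi m = 0,
      forall l0 q q', (q < size (lits C))%N -> (q' < size (lits C))%N -> q != q' ->
        dot (litvec u (nth l0 (lits C) q)) (litvec u (nth l0 (lits C) q')) = 1 - 2 * (pi q + pi q')
    & [/\ uniq (map snd (lits C)), (2 <= size (lits C))%N & (size (lits C) <= 5)%N]].

Lemma feas_clause (C : clause n) pi : good_pi C pi ->
  [/\ forall a : assn C, 0 <= pdist pi a,
      \sum_(a : assn C) pdist pi a = 1,
      forall i j, i \in vars C -> j \in vars C ->
        dot (u i) (u j) = \sum_(a : assn C) aval R a i * aval R a j * pdist pi a,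
      forall i, i \in vars C -> \sum_(a : assn C) aval R a i * pdist pi a = 0
    & \sum_(a : assn C) pdist pi a * (sat a)%:R = 1].
Proof.
case=> pi0 pi1 piz piG [U H2 H5]; split.
- move=> a; apply: sumr_ge0 => m _; apply: sumr_ge0 => c _.
  by apply: mulr_ge0; [apply: divr_ge0 | apply: ler0n].
- transitivity (\sum_(a : assn C) 1 * pdist pi a).
    by apply: eq_bigr => a _; rewrite mul1r.
  rewrite (moment pi (fun _ => 1)) -[RHS]pi1; apply: eq_bigr => m _.
  by rewrite big_bool /= !mulr1; field.
- move=> i j Hi Hj.
  rewrite (moment pi (fun a => aval R a i * aval R a j)).
  under eq_bigr do under eq_bigr do rewrite (aval_alpha _ _ (true, i) Hi) (aval_alpha _ _ (true, i) Hj).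
  under eq_bigr do rewrite sum_c.
  set bi := pm R _; set bj := pm R _.
  have Li := vidx_lt Hi; have Lj := vidx_lt Hj.
  have Gd : dot (u i) (u j) = bi * bj * dot (litvec u (nth (true, i) (lits C) (vidx C i)))
                                            (litvec u (nth (true, i) (lits C) (vidx C j))).
    rewrite /litvec !nth_vidx // dotZl dotZr -/bi -/bj mulrA.
    have sqi : bi * bi = 1 by rewrite /bi pm_sq.
    have sqj : bj * bj = 1 by rewrite /bj pm_sq.
    set X := dot (u i) (u j).
    have -> : bi * bj * (bi * bj * X) = (bi * bi) * (bj * bj) * X by ring.
    by rewrite sqi sqj !mul1r.
  have [Eij|Nij] := eqVneq i j.
    subst j; rewrite hunit; under eq_bigr do rewrite eqxx.
    rewrite -{1}pi1; apply: eq_bigr => m _.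
    have sqi : bi * bi = 1 by rewrite /bi pm_sq.
    have -> : 2 * (pi m / 2) * bi * bi * 1 = pi m * (bi * bi) by field.
    by rewrite sqi mulr1.
  have Nq : vidx C i != vidx C j.
    apply/negP => /eqP Eq; move/negP: Nij; apply; apply/eqP.
    by rewrite -(nth_vidx (true, i) Hi) Eq nth_vidx.
  rewrite Gd piG //.
  under eq_bigr do rewrite (sign_split _ Nq).
  have E : forall m : 'I_5, 2 * (pi m / 2) * bi * bj * (1 - 2 * (vidx C i == m)%:R - 2 * (vidx C j == m)%:R) =
     bi * bj * (pi m - 2 * (pi m * (vidx C i == m)%:R) - 2 * (pi m * (vidx C j == m)%:R)).
    by move=> m; field.
  under eq_bigr do rewrite E.
  rewrite -mulr_sumr !sumrB -!mulr_sumr !sum_pick ?pi1 //; try exact: leq_trans H5.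
  ring.
- move=> i Hi; rewrite (moment pi (fun a => aval R a i)).
  under eq_bigr do under eq_bigr do rewrite (aval_alpha _ _ (true, i) Hi).
  by rewrite big1 // => m _; rewrite sum_c1.
- under eq_bigr do rewrite mulrC.
  rewrite (moment pi (fun a => (sat a)%:R)) -[RHS]pi1; apply: eq_bigr => m _.
  have [Hm|Hm] := ltnP m (size (lits C)).
    by rewrite big_bool !sat_alpha //= mulr1; field.
  by rewrite piz // big_bool /= !mul0r addr0.
Qed.

Lemma litvec_same (l l' : lit n) : l.2 = l'.2 ->
  dot (litvec u l) (litvec u l') = pm R l.1 * pm R l'.1.
Proof. by move=> E; rewrite /litvec dotZl dotZr E hunit mulr1. Qed.

Lemma uniq_from (L : seq (lit n)) (pi : nat -> R) :
  (forall q, (q < size L)%N -> 0 < pi q <= 1/3) ->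
  (forall l0 q q', (q < size L)%N -> (q' < size L)%N -> q != q' ->
     dot (litvec u (nth l0 L q)) (litvec u (nth l0 L q')) = 1 - 2 * (pi q + pi q')) ->
  uniq (map snd L).
Proof.
case: L => [//|l L] Hb HG; apply/(uniqP l.2) => q q'; rewrite !inE size_map => Hq Hq' E.
rewrite !(nth_map l) // in E.
apply/eqP; apply/negPn/negP => N; have := HG l q q' Hq Hq' N.
rewrite litvec_same //.
have /andP [a1 a2] := Hb q Hq; have /andP [b1 b2] := Hb q' Hq'.
by case: (nth l (l :: L) q).1; case: (nth l (l :: L) q').1; rewrite /pm => H; clear -H a1 a2 b1 b2; lra.
Qed.

Lemma good_pi_intro (C : clause n) (pi : nat -> R) :
  (forall m, 0 <= pi m) -> \sum_(m < 5) pi m = 1 ->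
  (forall m, (size (lits C) <= m)%N -> pi m = 0) ->
  (forall q, (q < size (lits C))%N -> 0 < pi q <= 1/3) ->
  (forall l0 q q', (q < size (lits C))%N -> (q' < size (lits C))%N -> q != q' ->
        dot (litvec u (nth l0 (lits C) q)) (litvec u (nth l0 (lits C) q')) = 1 - 2 * (pi q + pi q')) ->
  (2 <= size (lits C))%N -> (size (lits C) <= 5)%N -> good_pi C pi.
Proof.
move=> H0 H1 Hz Hb HG H2 H5; split => //; split => //; exact: uniq_from Hb HG.
Qed.

Lemma good_exists (C : clause n) : good_vectors u C -> exists pi, good_pi C pi.
Proof.
case: C => t /= hg.
- exists (fun m => if (m < 3)%N then 1/3 else 0).
  have St : size (lits (NAE3 t)) = 3%N by rewrite /= size_tuple.
  apply: good_pi_intro; rewrite ?St //.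
  + by move=> m; case: ifP => _; lra.
  + rewrite -(big_mkord xpredT (fun m => if (m < 3)%N then 1/3 else 0)).
    rewrite !big_nat_recr //= big_geq //=; lra.
  + by move=> m Hm; rewrite ltnNge Hm.
  + by move=> q ->; lra.
  move=> l0 q q' Hq Hq' N; rewrite Hq Hq' /=.
  have := hg (Ordinal Hq) (Ordinal Hq') N; rewrite !(tnth_nth l0) /= => ->; lra.
- case: hg => s [H1 H2].
  pose pi := fun m : nat => if m == (s ord_max : nat) then 1/3 else if (m < 5)%N then 1/6 else 0 : R.
  exists pi.
  have St : size (lits (NAE5 t)) = 5%N by rewrite /= size_tuple.
  have pis : forall a : 'I_5, pi (s a) = if a == ord_max then 1/3 else 1/6.
    move=> a; rewrite /pi val_eqE (inj_eq perm_inj) ltn_ord; by [].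
  apply: good_pi_intro; rewrite ?St //.
  + by move=> m; rewrite /pi; case: ifP => _; [|case: ifP => _]; lra.
  + rewrite -(big_mkord xpredT pi) !big_nat_recr //= big_geq //= /pi.
    case: (s ord_max) => [[|[|[|[|[|j]]]]] Hj] //=; lra.
  + move=> m Hm; rewrite /pi; have -> : (m == s ord_max) = false.
      by apply/negbTE; rewrite neq_ltn (leq_trans (ltn_ord _) Hm) orbT.
    by rewrite ltnNge Hm.
  + move=> q Hq; rewrite /pi; case: ifP => _; [|rewrite Hq]; lra.
  have key : forall a b : 'I_5, (a < b)%N ->
      dot (litvec u (tnth t (s a))) (litvec u (tnth t (s b))) = 1 - 2 * (pi (s a) + pi (s b)).
    move=> a b ab; rewrite !pis.
    have an : a != ord_max by rewrite neq_ltn (leq_trans ab) //; rewrite -ltnS.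
    rewrite (negbTE an).
    have [b4|b4] := ltnP b 4.
      have bn : b != ord_max by rewrite neq_ltn b4.
      by rewrite (negbTE bn) (H1 a b ab b4); lra.
    have bm : b = ord_max by apply/val_inj => /=; apply/eqP; rewrite eqn_leq b4 -ltnS ltn_ord.
    subst b; rewrite eqxx (H2 a ab); lra.
  move=> l0 q q' Hq Hq' N.
  have Hq5 : (q < 5)%N by []. have Hq5' : (q' < 5)%N by []. clear Hq Hq'. rename Hq5 into Hq. rename Hq5' into Hq'.
  set a := (s^-1)%g (Ordinal Hq); set b := (s^-1)%g (Ordinal Hq').
  have Ea : nth l0 (lits (NAE5 t)) q = tnth t (s a) by rewrite /a permKV (tnth_nth l0).
  have Eb : nth l0 (lits (NAE5 t)) q' = tnth t (s b) by rewrite /b permKV (tnth_nth l0).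
  have Pa : pi q = pi (s a) by rewrite /a permKV.
  have Pb : pi q' = pi (s b) by rewrite /b permKV.
  rewrite Ea Eb Pa Pb.
  case: (ltngtP a b) => [ab|ba|e]; first exact: key.
    by rewrite dotC [pi (s a) + _]addrC; apply: key.
  have /(congr1 s) : a = b by apply: val_inj.
  by rewrite /a /b !permKV => /(congr1 val) /= E; rewrite E eqxx in N.
Qed.
End CL.

Lemma dot0r (R : realType) d (x : 'rV[R]_d) : dot x 0 = 0.
Proof. by rewrite /dot big1 // => k _; rewrite mxE mulr0. Qed.

Theorem mainTheorem2 (R : realType) (n : nat) (Phi : instance R n)
  (hpos : forall k : 'I_(size Phi), 0 < (wclause k).1)
  (hsum : \sum_(wc <- Phi) wc.1 = 1)
  (d : nat) (u : 'I_n -> 'rV[R]_d)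
  (hunit : forall i : 'I_n, dot (u i) (u i) = 1)
  (hgood : forall k : 'I_(size Phi), good_vectors u (wclause k).2) :
  completeness Phi = 1.
Proof.
have Sw : \sum_(k < size Phi) (wclause k).1 = 1.
  by rewrite -hsum (big_tuple _ _ (in_tuple Phi)).
have ub : forall v p, @sdp_feasible R n Phi v p -> sdp_obj p <= 1.
  move=> v p [_ Hk]; rewrite /sdp_obj -[X in _ <= X]Sw; apply: ler_sum => k _.
  have [p0 [p1 _]] := Hk k.
  have le1 : \sum_a p k a * (sat a)%:R <= \sum_a p k a.
    by apply: ler_sum => a _; case: (sat a); rewrite ?mulr1 ?mulr0 //; exact: p0.
  rewrite -[X in _ <= X]mulr1; apply: ler_wpM2l; first exact: ltW.
  by apply: le_trans le1 _; rewrite p1.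
have [w Hw] := gram_rep u.
have ex : forall k : 'I_(size Phi), exists pi, good_pi u (wclause k).2 pi.
  by move=> k0; exact: (@good_exists R n d u hunit _ (hgood k0)).
case: (boolp.choice ex) => PI HPI.
pose v : 'I_n.+1 -> 'rV[R]_n.+1 := fun k =>
  if unlift ord0 k is Some i then ext0 (w i) 0 else ext0 0 1.
pose p := fun (k : 'I_(size Phi)) (a : assn (wclause k).2) => pdist (PI k) a.
have feas : sdp_feasible v p.
  split.
    move=> k; case: (unliftP ord0 k) => [i ->|->]; rewrite /v ?liftK ?unlift_none dot_ext0.
      by rewrite mul0r add0r Hw hunit.
    by rewrite dot0r mulr1 addr0.
  move=> k C; have [A1 A2 A3 A4 A5] := feas_clause hunit (HPI k).
  split; first exact: A1.
  split; first exact: A2.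
  split.
    by move=> i j Hi Hj; rewrite /vvar /v !liftK dot_ext0 mul0r add0r Hw; apply: A3.
  move=> i Hi; rewrite /vvar /v liftK unlift_none dot_ext0 mul0r add0r dot0r.
  by rewrite /p A4.
have obj : sdp_obj p = 1.
  rewrite /sdp_obj -[RHS]Sw; apply: eq_bigr => k _.
  have [_ _ _ _ A5] := feas_clause hunit (HPI k).
  by rewrite /p A5 mulr1.
rewrite /completeness; set E := (X in sup X).
have E1 : E 1 by exists v, p.
have ubE : ubound E 1 by move=> x [v' [p' [F ->]]]; apply: ub F.
apply/eqP; rewrite eq_le; apply/andP; split.
  by apply: ge_sup => //; exists 1.
by apply: (ub_le_sup (ex_intro _ 1 ubE)).
Qed.
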